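(* Assume the Population Invariant holds at all times and $n_0$ is sufficiently large (in particular $n_0\ge 40$). Then with high probability, for every interval $(t,t']$, the number $a$ of good IDs that join during the interval satisfies $a\le 23|S(t)|+4$.
   Context: Model. Time is continuous. At each time $x$ the system consists of a finite set $S(x)$ of IDs partitioned into good IDs $G(x)$ and bad IDs $B(x)=S(x)\setminus G(x)$. Membership changes only by join events (a new ID, never previously present, is added) and departure events (one ID removed), each at a distinct time. $|G(x)|\ge n_0$ for all $x$. Whenever a good ID departs (the adversary may choose when), the departing ID is chosen independently and uniformly at random from the set of good IDs currently in the system. Population Invariant: $|B(x)|<\frac16|S(x)|$ for all $x$. $A\triangle B$ is symmetric difference. The system lifetime consists of $n_0^{\gamma}$ join/departure events for a fixed constant $\gamma>0$; ''with high probability'' means with probability at least $1-O(1/n_0)$ over the system lifetime. Intervals: an interval beginning at time $t$ ends at the first time $t'>t$ with $|S(t')\triangle S(t)|\ge\frac58|S(t')|$ (so $|S(t')\triangle S(t)|=\lceil\frac58|S(t')|\rceil$), and the next interval starts at $t'$. *)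

(* Defs.v *)
From Stdlib Require Import Reals List Arith Lia ClassicalDescription.
Import ListNotations.

Inductive event : Type :=
| EJoin (x : nat) (good : bool)
| EDep (x : nat).

(* Moves of a (deterministic, adaptive) adversary: it chooses a join (ID and
   whether it is good), the departure of a bad ID of its choice, or to trigger
   a good departure, whose departing ID is chosen uniformly at random among
   the good IDs currently present. *)
Inductive move : Type :=
| MJoin (x : nat) (good : bool)
| MDepBad (x : nat)
| MDepGood.

Record config : Type := Config { cS : list nat; cG : list nat }.

Definition memb (x : nat) (l : list nat) : bool := existsb (Nat.eqb x) l.

Definition step (c : config) (e : event) : config :=
  match e with
  | EJoin x b => Config (x :: cS c) (if b then x :: cG c else cG c)
  | EDep x => Config (remove Nat.eq_dec x (cS c)) (remove Nat.eq_dec x (cG c))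
  end.

Definition state (S0 G0 : list nat) (h : list event) : config :=
  fold_left step h (Config S0 G0).

(* configuration at "time" k, i.e. after the first k events of h *)
Definition state_at (S0 G0 : list nat) (h : list event) (k : nat) : config :=
  state S0 G0 (firstn k h).

Definition bads (c : config) : list nat :=
  filter (fun x => negb (memb x (cG c))) (cS c).

Definition seen (S0 : list nat) (h : list event) : list nat :=
  S0 ++ flat_map (fun e => match e with EJoin x _ => [x] | EDep _ => [] end) h.

Definition symdiff_size (A B : list nat) : nat :=
  length (filter (fun x => negb (memb x B)) A)
  + length (filter (fun x => negb (memb x A)) B).

Definition end_cond (S0 G0 : list nat) (h : list event) (i j : nat) : Prop :=
  5 * length (cS (state_at S0 G0 h j))
  <= 8 * symdiff_size (cS (state_at S0 G0 h j)) (cS (state_at S0 G0 h i)).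

Definition first_end (S0 G0 : list nat) (h : list event) (i j : nat) : Prop :=
  i < j /\ j <= length h /\ end_cond S0 G0 h i j /\
  (forall k, i < k < j -> ~ end_cond S0 G0 h i k).

Inductive boundary (S0 G0 : list nat) (h : list event) : nat -> Prop :=
| boundary0 : boundary S0 G0 h 0
| boundaryS : forall i j, boundary S0 G0 h i -> first_end S0 G0 h i j ->
    boundary S0 G0 h j.

Definition interval (S0 G0 : list nat) (h : list event) (i j : nat) : Prop :=
  boundary S0 G0 h i /\ first_end S0 G0 h i j.

(* number of good IDs joining during (i, j]: events number i+1 .. j *)
Definition good_joins (h : list event) (i j : nat) : nat :=
  length (filter (fun e => match e with EJoin _ true => true | _ => false end)
                 (firstn (j - i) (skipn i h))).

(* Histories reachable under adversary A (any outcome of the random choices) *)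
Inductive reachable (S0 G0 : list nat) (A : list event -> move)
  : list event -> Prop :=
| reach_nil : reachable S0 G0 A []
| reach_join : forall h x b, reachable S0 G0 A h -> A h = MJoin x b ->
    reachable S0 G0 A (h ++ [EJoin x b])
| reach_depbad : forall h x, reachable S0 G0 A h -> A h = MDepBad x ->
    reachable S0 G0 A (h ++ [EDep x])
| reach_depgood : forall h x, reachable S0 G0 A h -> A h = MDepGood ->
    In x (cG (state S0 G0 h)) -> reachable S0 G0 A (h ++ [EDep x]).

(* Standing assumptions for a lifetime of L events: the initial configuration
   is well formed; at every reachable time |G| >= n0 and the Population
   Invariant |B| < |S|/6 hold; joins use IDs never previously present; bad
   departures remove a bad ID currently present. *)
Definition valid (n0 L : nat) (S0 G0 : list nat) (A : list event -> move)
  : Prop :=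
  NoDup S0 /\ NoDup G0 /\ incl G0 S0 /\
  forall h, reachable S0 G0 A h -> length h <= L ->
    n0 <= length (cG (state S0 G0 h)) /\
    6 * length (bads (state S0 G0 h)) < length (cS (state S0 G0 h)) /\
    (length h < L ->
      match A h with
      | MJoin x _ => ~ In x (seen S0 h)
      | MDepBad x => In x (bads (state S0 G0 h))
      | MDepGood => True
      end).

Definition indicator (P : Prop) : R :=
  if excluded_middle_informative P then 1%R else 0%R.

Fixpoint prob (S0 G0 : list nat) (A : list event -> move)
  (P : list event -> Prop) (n : nat) (h : list event) : R :=
  match n with
  | O => indicator (P h)
  | S n' =>
      match A h with
      | MJoin x b => prob S0 G0 A P n' (h ++ [EJoin x b])
      | MDepBad x => prob S0 G0 A P n' (h ++ [EDep x])
      | MDepGood =>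
          let g := cG (state S0 G0 h) in
          (/ INR (length g) *
           fold_right (fun x acc => prob S0 G0 A P n' (h ++ [EDep x]) + acc)
                      0 g)%R
      end
  end.

Definition some_interval_too_many_joins (S0 G0 : list nat) (h : list event)
  : Prop :=
  exists i j, interval S0 G0 h i j /\
    23 * length (cS (state_at S0 G0 h i)) + 4 < good_joins h i j.

(* Main.v *)
Require Import Defs.
From Stdlib Require Import Reals List Arith Lia Lra ZArith ClassicalDescription.
Import ListNotations.

Lemma memb_In x l : memb x l = true <-> In x l.
Proof.
  unfold memb. rewrite existsb_exists. split.
  - intros [y [Hy E]]. apply Nat.eqb_eq in E. subst. exact Hy.
  - intros H. exists x. split; [exact H| apply Nat.eqb_refl].
Qed.

Lemma memb_false x l : memb x l = false <-> ~ In x l.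
Proof.
  split.
  - intros H H'. apply memb_In in H'. congruence.
  - intros H. destruct (memb x l) eqn:E; auto. apply memb_In in E. contradiction.
Qed.

Lemma filter_split_len {T} (f : T -> bool) l :
  length (filter f l) + length (filter (fun x => negb (f x)) l) = length l.
Proof. induction l as [|a l IH]; simpl; auto. destruct (f a); simpl; lia. Qed.

Lemma filter_len_mono {T} (f g : T -> bool) l :
  (forall y, In y l -> f y = true -> g y = true) ->
  length (filter f l) <= length (filter g l).
Proof.
  induction l as [|a l IH]; simpl; intros H; auto.
  destruct (f a) eqn:Ea.
  - rewrite (H a (or_introl eq_refl) Ea). simpl. apply le_n_S. apply IH; auto.
  - destruct (g a); simpl; [apply le_S|]; apply IH; auto.
Qed.

Lemma filter_len_mono_strict {T} (f g : T -> bool) l :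
  (forall y, In y l -> f y = true -> g y = true) ->
  (exists z, In z l /\ g z = true /\ f z = false) ->
  length (filter f l) + 1 <= length (filter g l).
Proof.
  induction l as [|a l IH]; simpl; intros H [z [Hz [Gz Fz]]]; [contradiction|].
  destruct Hz as [<-|Hz].
  - rewrite Fz, Gz. simpl. pose proof (filter_len_mono f g l (fun y Hy => H y (or_intror Hy))). lia.
  - destruct (f a) eqn:Ea.
    + rewrite (H a (or_introl eq_refl) Ea). simpl.
      pose proof (IH (fun y Hy => H y (or_intror Hy)) (ex_intro _ z (conj Hz (conj Gz Fz)))). lia.
    + pose proof (IH (fun y Hy => H y (or_intror Hy)) (ex_intro _ z (conj Hz (conj Gz Fz)))).
      destruct (g a); simpl; lia.
Qed.

Lemma NoDup_remove' x l : NoDup l -> NoDup (remove Nat.eq_dec x l).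
Proof.
  induction 1 as [|a l Ha Hl IH]; simpl; [constructor|].
  destruct (Nat.eq_dec x a); auto. constructor; auto.
  intros Hin. apply in_remove in Hin. tauto.
Qed.

Lemma filter_remove_same (f : nat -> bool) x l :
  f x = false -> filter f (remove Nat.eq_dec x l) = filter f l.
Proof.
  intros Hf. induction l as [|a l IH]; simpl; auto.
  destruct (Nat.eq_dec x a) as [<-|n]; simpl.
  - rewrite Hf. exact IH.
  - destruct (f a); simpl; congruence.
Qed.

Lemma filter_remove_len (f : nat -> bool) x l : NoDup l ->
  length (filter f l) <= length (filter f (remove Nat.eq_dec x l)) + 1.
Proof.
  induction 1 as [|a l Ha Hl IH]; simpl; auto.
  destruct (Nat.eq_dec x a) as [<-|n].
  - rewrite notin_remove by exact Ha. destruct (f x); simpl; lia.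
  - simpl. destruct (f a); simpl; lia.
Qed.

Definition notin (l : list nat) := fun y => negb (memb y l).

Lemma incl_filter_len (f : nat -> bool) l l' :
  NoDup l -> incl (filter f l) l' -> length (filter f l) <= length l'.
Proof. intros. apply NoDup_incl_length; auto. apply NoDup_filter; auto. Qed.

Lemma firstn_snoc {T} k (h : list T) e : k <= length h -> firstn k (h ++ [e]) = firstn k h.
Proof.
  intros Hk. rewrite firstn_app. replace (k - length h) with 0 by lia. simpl. apply app_nil_r.
Qed.

Lemma state_snoc S0 G0 h e : state S0 G0 (h ++ [e]) = step (state S0 G0 h) e.
Proof. unfold state. rewrite fold_left_app. reflexivity. Qed.

Lemma state_at_snoc S0 G0 h e k : k <= length h ->
  state_at S0 G0 (h ++ [e]) k = state_at S0 G0 h k.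
Proof. intros. unfold state_at. rewrite firstn_snoc; auto. Qed.

Lemma state_at_full S0 G0 h : state_at S0 G0 h (length h) = state S0 G0 h.
Proof. unfold state_at. rewrite firstn_all. reflexivity. Qed.

Lemma state_at_full' S0 G0 h e : state_at S0 G0 (h ++ [e]) (S (length h)) = state S0 G0 (h ++ [e]).
Proof. unfold state_at. rewrite firstn_all2; auto. rewrite length_app. simpl. lia. Qed.

Definition isg (e : event) : nat := match e with EJoin _ true => 1 | _ => 0 end.

Lemma good_joins_snoc h e i j : i <= j <= length h ->
  good_joins (h ++ [e]) i j = good_joins h i j.
Proof.
  intros Hij. unfold good_joins. rewrite skipn_app.
  replace (i - length h) with 0 by lia. simpl.
  rewrite firstn_app, length_skipn. replace (j - i - (length h - i)) with 0 by lia.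
  simpl. rewrite app_nil_r. reflexivity.
Qed.

Lemma good_joins_last h e i : i <= length h ->
  good_joins (h ++ [e]) i (S (length h)) = good_joins h i (length h) + isg e.
Proof.
  intros Hi. unfold good_joins. rewrite skipn_app.
  replace (i - length h) with 0 by lia. cbn [skipn].
  rewrite firstn_all2 by (rewrite length_app, length_skipn; cbn [length]; lia).
  rewrite (firstn_all2 (n:=length h - i) (skipn i h)) by (rewrite length_skipn; lia).
  rewrite filter_app, length_app. f_equal. destruct e as [x [|]|x]; reflexivity.
Qed.

Lemma end_cond_snoc S0 G0 h e i k : i <= length h -> k <= length h ->
  (end_cond S0 G0 (h ++ [e]) i k <-> end_cond S0 G0 h i k).
Proof.
  intros. unfold end_cond. rewrite !state_at_snoc by auto. tauto.
Qed.

Lemma seen_snoc S0 h e : seen S0 (h ++ [e]) =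
  seen S0 h ++ match e with EJoin x _ => [x] | EDep _ => [] end.
Proof. unfold seen. rewrite flat_map_app. simpl. rewrite app_nil_r, app_assoc. reflexivity. Qed.

Lemma seen_prefix S0 h k : incl (seen S0 (firstn k h)) (seen S0 h).
Proof.
  rewrite <- (firstn_skipn k h) at 2. unfold seen. rewrite flat_map_app.
  intros y Hy. apply in_app_or in Hy. apply in_or_app. destruct Hy; auto.
  right. apply in_or_app. auto.
Qed.

Lemma reachable_prefix S0 G0 A h k : reachable S0 G0 A h -> reachable S0 G0 A (firstn k h).
Proof.
  induction 1 as [|h x b R IH Ah|h x R IH Ah|h x R IH Ah Hx].
  1: rewrite firstn_nil; constructor.
  all: destruct (le_lt_dec k (length h)) as [Hk|Hk];
    [rewrite firstn_snoc; auto
    | rewrite firstn_all2 by (rewrite length_app; simpl; lia)].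
  - apply reach_join; auto.
  - apply reach_depbad; auto.
  - eapply reach_depgood; eauto.
Qed.


Definition INV (S0 : list nat) (h : list event) (c : config) : Prop :=
  NoDup (cS c) /\ NoDup (cG c) /\ incl (cG c) (cS c) /\ incl (cS c) (seen S0 h).

Lemma inv_reach n0 L S0 G0 A h : valid n0 L S0 G0 A -> reachable S0 G0 A h ->
  length h <= L -> INV S0 h (state S0 G0 h).
Proof.
  intros HV. destruct HV as [ND0 [NG0 [I0 HV]]].
  induction 1 as [|h x b R IH Ah|h x R IH Ah|h x R IH Ah Hx]; intros Hl.
  - unfold INV, state, seen; simpl. repeat split; auto. rewrite app_nil_r. apply incl_refl.
  - rewrite length_app in Hl; simpl in Hl.
    assert (Hl' : length h <= L) by lia. specialize (IH Hl').
    destruct (HV h R Hl') as [_ [_ Hm]]. specialize (Hm ltac:(lia)). rewrite Ah in Hm.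
    destruct IH as [N1 [N2 [N3 N4]]].
    unfold INV. rewrite state_snoc, seen_snoc. unfold step; simpl.
    assert (Hx : ~ In x (cS (state S0 G0 h))) by (intro; apply Hm, N4; auto).
    repeat split.
    + constructor; auto.
    + destruct b; auto. constructor; auto.
    + destruct b; [apply incl_cons; [left; auto|]|]; apply incl_tl; auto.
    + apply incl_cons. apply in_or_app; right; left; auto.
      intros y Hy. apply in_or_app. left. auto.
  - rewrite length_app in Hl; simpl in Hl.
    assert (Hl' : length h <= L) by lia. specialize (IH Hl').
    destruct IH as [N1 [N2 [N3 N4]]].
    unfold INV. rewrite state_snoc, seen_snoc. unfold step; simpl. rewrite app_nil_r.
    repeat split.
    + apply NoDup_remove'; auto.
    + apply NoDup_remove'; auto.
    + intros y Hy. apply in_remove in Hy. apply in_in_remove; [tauto | apply N3; tauto].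
    + intros y Hy. apply in_remove in Hy. apply N4; tauto.
  - rewrite length_app in Hl; simpl in Hl.
    assert (Hl' : length h <= L) by lia. specialize (IH Hl').
    destruct IH as [N1 [N2 [N3 N4]]].
    unfold INV. rewrite state_snoc, seen_snoc. unfold step; simpl. rewrite app_nil_r.
    repeat split.
    + apply NoDup_remove'; auto.
    + apply NoDup_remove'; auto.
    + intros y Hy. apply in_remove in Hy. apply in_in_remove; [tauto | apply N3; tauto].
    + intros y Hy. apply in_remove in Hy. apply N4; tauto.
Qed.

Lemma inv_at n0 L S0 G0 A h i : valid n0 L S0 G0 A -> reachable S0 G0 A h ->
  length h <= L -> NoDup (cS (state_at S0 G0 h i)) /\ incl (cS (state_at S0 G0 h i)) (seen S0 h).
Proof.
  intros HV R Hl. unfold state_at.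
  assert (Hl' : length (firstn i h) <= L) by (rewrite length_firstn; lia).
  destruct (inv_reach n0 L S0 G0 A (firstn i h) HV (reachable_prefix _ _ _ _ i R) Hl') as [N1 [_ [_ N4]]].
  split; auto. intros y Hy. apply (seen_prefix S0 h i). auto.
Qed.

Local Open Scope R_scope.

Definition fsum (l : list nat) (f : nat -> R) : R := fold_right (fun x acc => f x + acc) 0 l.

Lemma fsum_mono l f g : (forall x, In x l -> f x <= g x) -> fsum l f <= fsum l g.
Proof.
  induction l as [|a l IH]; simpl; intros H; [lra|].
  pose proof (H a (or_introl eq_refl)). pose proof (IH (fun x Hx => H x (or_intror Hx))). lra.
Qed.

Lemma fsum_const_le l f c : (forall x, In x l -> f x <= c) -> fsum l f <= INR (length l) * c.
Proof.
  induction l as [|a l IH]; intros H; [simpl; lra|].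
  change (fsum (a::l) f) with (f a + fsum l f). change (length (a::l)) with (S (length l)). rewrite S_INR. pose proof (H a (or_introl eq_refl)). pose proof (IH (fun x Hx => H x (or_intror Hx))). lra.
Qed.

Lemma fsum_if l (p : nat -> bool) a c :
  fsum l (fun x => if p x then a else c) =
  INR (length (filter p l)) * a + INR (length (filter (fun x => negb (p x)) l)) * c.
Proof.
  induction l as [|y l IH]; [simpl; lra|].
  change (fsum (y::l) (fun x => if p x then a else c)) with ((if p y then a else c) + fsum l (fun x => if p x then a else c)).
  rewrite IH.
  cbn [filter]; destruct (p y); cbn [negb]; rewrite ?length_cons, ?S_INR; lra.
Qed.

Lemma avg_le l f c : l <> [] -> (forall x, In x l -> f x <= c) -> / INR (length l) * fsum l f <= c.
Proof.
  intros Hl H. pose proof (fsum_const_le l f c H).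
  assert (0 < INR (length l)) by (apply lt_0_INR; destruct l; simpl; [congruence|lia]).
  apply Rmult_le_reg_l with (INR (length l)); auto.
  rewrite <- Rmult_assoc, Rinv_r by lra. lra.
Qed.

Fixpoint sumR (n : nat) (f : nat -> R) : R :=
  match n with O => 0 | S n' => sumR n' f + f n' end.

Lemma sumR_le n f g : (forall i, (i < n)%nat -> f i <= g i) -> sumR n f <= sumR n g.
Proof.
  induction n; simpl; intros H; [lra|].
  pose proof (H n ltac:(lia)). pose proof (IHn (fun i Hi => H i ltac:(lia))). lra.
Qed.

Lemma sumR_nonneg n f : (forall i, (i < n)%nat -> 0 <= f i) -> 0 <= sumR n f.
Proof.
  induction n; simpl; intros H; [lra|].
  pose proof (H n ltac:(lia)). pose proof (IHn (fun i Hi => H i ltac:(lia))). lra.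
Qed.

Lemma sumR_ge_one n f j : (forall i, (i < n)%nat -> 0 <= f i) -> (j < n)%nat -> 1 <= f j -> 1 <= sumR n f.
Proof.
  induction n; simpl; intros H Hj Hf; [lia|].
  destruct (Nat.eq_dec j n) as [->|Hne].
  - pose proof (sumR_nonneg n f (fun i Hi => H i ltac:(lia))). lra.
  - pose proof (H n ltac:(lia)). pose proof (IHn (fun i Hi => H i ltac:(lia)) ltac:(lia) Hf). lra.
Qed.

Lemma sumR_const_le n f c : (forall i, (i < n)%nat -> f i <= c) -> sumR n f <= INR n * c.
Proof.
  induction n; simpl sumR; intros H; [simpl; lra|].
  rewrite S_INR. pose proof (H n ltac:(lia)). pose proof (IHn (fun i Hi => H i ltac:(lia))). lra.
Qed.

Lemma fsum_sumR l n (f : nat -> nat -> R) :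
  fsum l (fun x => sumR n (fun i => f i x)) = sumR n (fun i => fsum l (f i)).
Proof.
  induction l as [|a l IH]; simpl.
  - induction n; simpl; [lra|]. rewrite <- IHn. lra.
  - rewrite IH. clear IH. induction n; simpl; [lra|]. lra.
Qed.

Lemma sumR_mult c n f : c * sumR n f = sumR n (fun i => c * f i).
Proof. induction n; simpl; [lra|]. rewrite <- IHn. lra. Qed.

Lemma prob_bound S0 G0 A (P : list event -> Prop) (Phi : list event -> R) L :
  (forall h, reachable S0 G0 A h -> length h = L -> indicator (P h) <= Phi h) ->
  (forall h, reachable S0 G0 A h -> (length h < L)%nat ->
     match A h with
     | MJoin x b => Phi (h ++ [EJoin x b]) <= Phi h
     | MDepBad x => Phi (h ++ [EDep x]) <= Phi h
     | MDepGood => / INR (length (cG (state S0 G0 h))) *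
                   fsum (cG (state S0 G0 h)) (fun x => Phi (h ++ [EDep x])) <= Phi h
     end) ->
  forall n h, reachable S0 G0 A h -> (length h + n = L)%nat -> prob S0 G0 A P n h <= Phi h.
Proof.
  intros Hend Hstep. induction n as [|n IH]; intros h R Hl.
  - simpl. apply Hend; auto. lia.
  - simpl. specialize (Hstep h R ltac:(lia)). destruct (A h) eqn:Ah.
    + eapply Rle_trans; [|exact Hstep]. apply IH. apply reach_join; auto.
      rewrite length_app; simpl; lia.
    + eapply Rle_trans; [|exact Hstep]. apply IH. apply reach_depbad; auto.
      rewrite length_app; simpl; lia.
    + eapply Rle_trans; [|exact Hstep].
      destruct (cG (state S0 G0 h)) as [|y g] eqn:EG.
      * simpl. lra.
      * apply Rmult_le_compat_l.
        -- left. apply Rinv_0_lt_compat. apply lt_0_INR. simpl; lia.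
        -- change (fsum (y :: g) (fun x => prob S0 G0 A P n (h ++ [EDep x])) <=
                   fsum (y :: g) (fun x => Phi (h ++ [EDep x]))).
           apply fsum_mono. intros x Hx. apply IH.
           ++ eapply reach_depgood; eauto. rewrite EG; auto.
           ++ rewrite length_app; simpl; lia.
Qed.

Local Close Scope R_scope.

Definition wtc (Sl : list nat) (c : config) : nat :=
  length (filter (notin Sl) (cG c)) + 6 * length (filter (notin (cS c)) Sl).

Lemma notin_cons x l y : notin (x :: l) y = andb (negb (Nat.eqb y x)) (notin l y).
Proof. unfold notin, memb. simpl. destruct (Nat.eqb y x); reflexivity. Qed.

Lemma notin_true l y : notin l y = true <-> ~ In y l.
Proof. unfold notin. rewrite <- memb_false. destruct (memb y l); simpl; split; congruence. Qed.

Lemma wtc_join Sl c x b : ~ In x Sl ->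
  wtc Sl (step c (EJoin x b)) = (wtc Sl c + isg (EJoin x b))%nat.
Proof.
  intros Hx. unfold wtc, step; simpl.
  assert (E : filter (notin (x :: cS c)) Sl = filter (notin (cS c)) Sl).
  { apply filter_ext_in. intros y Hy. rewrite notin_cons.
    destruct (Nat.eqb_spec y x); [subst; contradiction|reflexivity]. }
  rewrite E. destruct b; simpl; [|lia].
  assert (notin Sl x = true) by (apply notin_true; auto). rewrite H. simpl. lia.
Qed.

Lemma wtc_remove_S_mono Sl S x : 
  length (filter (notin S) Sl) <= length (filter (notin (remove Nat.eq_dec x S)) Sl).
Proof.
  apply filter_len_mono. intros y _ Hy. apply notin_true in Hy. apply notin_true.
  intros H. apply in_remove in H. tauto.
Qed.

Lemma wtc_depbad Sl c x : ~ In x (cG c) -> (wtc Sl c <= wtc Sl (step c (EDep x)))%nat.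
Proof.
  intros Hx. unfold wtc, step; simpl. rewrite notin_remove by auto.
  pose proof (wtc_remove_S_mono Sl (cS c) x). lia.
Qed.

Lemma wtc_dep_old Sl c x : In x (cS c) -> In x Sl ->
  (wtc Sl c + 6 <= wtc Sl (step c (EDep x)))%nat.
Proof.
  intros HS Hx. unfold wtc, step; simpl.
  rewrite filter_remove_same.
  2:{ unfold notin. rewrite (proj2 (memb_In x Sl) Hx). reflexivity. }
  assert (length (filter (notin (cS c)) Sl) + 1 <= length (filter (notin (remove Nat.eq_dec x (cS c))) Sl))%nat.
  { apply filter_len_mono_strict.
    - intros y _ Hy. apply notin_true in Hy. apply notin_true.
      intros H. apply in_remove in H. tauto.
    - exists x. split; auto. split.
      + apply notin_true. intros H. apply in_remove in H. tauto.
      + unfold notin. rewrite (proj2 (memb_In x _) HS). reflexivity. }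
  lia.
Qed.

Lemma wtc_dep_new Sl c x : NoDup (cG c) ->
  (wtc Sl c <= wtc Sl (step c (EDep x)) + 1)%nat.
Proof.
  intros ND. unfold wtc, step; simpl.
  pose proof (filter_remove_len (notin Sl) x (cG c) ND).
  pose proof (wtc_remove_S_mono Sl (cS c) x). lia.
Qed.

Local Open Scope R_scope.

Lemma qpow_anti a b : (b <= a)%nat -> (8/9)^a <= (8/9)^b.
Proof.
  intros H. replace a with (b + (a - b))%nat by lia. rewrite pow_add.
  assert (0 < (8/9)^b) by (apply pow_lt; lra).
  assert ((8/9)^(a-b) <= 1) by (rewrite <- (pow1 (a-b)); apply pow_incr; lra).
  nra.
Qed.

Lemma real_step g t w w' K u : (w + t <= w' + u)%nat ->
  (9/8)^(g+t) * (8/9)^(w'+K) <= (9/8)^g * (8/9)^(w+K) * (9/8)^u.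
Proof.
  intros H.
  assert (E1 : (8/9)^(w'+K) = (8/9)^(w'+u+K) * (9/8)^u).
  { replace (w'+u+K)%nat with ((w'+K)+u)%nat by lia. rewrite (pow_add (8/9) (w'+K) u). rewrite Rmult_assoc, <- Rpow_mult_distr.
    replace (8/9*(9/8)) with 1 by field. rewrite pow1. ring. }
  assert (E2 : (8/9)^(w'+u+K) <= (8/9)^(w+t+K)) by (apply qpow_anti; lia).
  assert (E3 : (9/8)^(g+t) * (8/9)^(w+t+K) = (9/8)^g * (8/9)^(w+K)).
  { replace (w+t+K)%nat with ((w+K)+t)%nat by lia. rewrite (pow_add (9/8) g t), (pow_add (8/9) (w+K) t).
    assert (Hbt : (9/8)^t * (8/9)^t = 1).
    { rewrite <- Rpow_mult_distr. replace (9/8*(8/9)) with 1 by field. apply pow1. }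
    transitivity ((9/8)^g * (8/9)^(w+K) * ((9/8)^t * (8/9)^t)); [ring|]. rewrite Hbt. ring. }
  rewrite E1.
  assert (0 <= (9/8)^(g+t)) by (apply pow_le; lra).
  assert (0 <= (9/8)^u) by (apply pow_le; lra).
  apply Rle_trans with ((9/8)^(g+t) * ((8/9)^(w+t+K) * (9/8)^u)).
  - apply Rmult_le_compat_l; auto. apply Rmult_le_compat_r; auto.
  - rewrite <- Rmult_assoc, E3. lra.
Qed.

Local Close Scope R_scope.

Definition Si S0 G0 h i := cS (state_at S0 G0 h i).
Definition sz S0 G0 h i := length (Si S0 G0 h i).
Definition Epre S0 G0 i h : Prop := exists j, i < j <= length h /\
  (forall k, i < k < j -> ~ end_cond S0 G0 h i k) /\ 23 * sz S0 G0 h i + 4 < good_joins h i j.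
Definition alive S0 G0 i h : Prop := forall k, i < k <= length h -> ~ end_cond S0 G0 h i k.
Definition Fv S0 G0 i h : R :=
  ((9/8)^(good_joins h i (length h)) * (8/9)^(wtc (Si S0 G0 h i) (state S0 G0 h) + 12 * sz S0 G0 h i))%R.

Lemma Si_snoc S0 G0 h e i : i <= length h -> Si S0 G0 (h ++ [e]) i = Si S0 G0 h i.
Proof. intros. unfold Si. rewrite state_at_snoc; auto. Qed.

Lemma sz_snoc S0 G0 h e i : i <= length h -> sz S0 G0 (h ++ [e]) i = sz S0 G0 h i.
Proof. intros. unfold sz. rewrite Si_snoc; auto. Qed.

Lemma Epre_snoc S0 G0 h e i : i <= length h -> Epre S0 G0 i h -> Epre S0 G0 i (h ++ [e]).
Proof.
  intros Hi [j [Hj [Hk Hg]]]. exists j. rewrite length_app; simpl. split; [lia|]. split.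
  - intros k Hk'. rewrite end_cond_snoc by lia. apply Hk; auto.
  - rewrite sz_snoc, good_joins_snoc by lia. auto.
Qed.

Lemma Epre_snoc_inv S0 G0 h e i : i <= length h -> Epre S0 G0 i (h ++ [e]) ->
  Epre S0 G0 i h \/ (alive S0 G0 i h /\ 23 * sz S0 G0 h i + 4 < good_joins h i (length h) + isg e).
Proof.
  intros Hi [j [Hj [Hk Hg]]]. rewrite length_app in Hj; simpl in Hj.
  rewrite sz_snoc in Hg by auto.
  destruct (Nat.eq_dec j (S (length h))) as [->|Hne].
  - right. split.
    + intros k Hk'. rewrite <- end_cond_snoc with (e := e) by lia. apply Hk. lia.
    + rewrite good_joins_last in Hg by auto. exact Hg.
  - left. exists j. split; [lia|]. split.
    + intros k Hk'. rewrite <- end_cond_snoc with (e := e) by lia. apply Hk. lia.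
    + rewrite good_joins_snoc in Hg by lia. exact Hg.
Qed.

Lemma alive_snoc_inv S0 G0 h e i : i <= length h -> alive S0 G0 i (h ++ [e]) -> alive S0 G0 i h.
Proof.
  intros Hi Ha k Hk. rewrite <- end_cond_snoc with (e := e) by lia. apply Ha.
  rewrite length_app; simpl; lia.
Qed.

Lemma Fv_snoc S0 G0 h e i : i <= length h ->
  Fv S0 G0 i (h ++ [e]) = ((9/8)^(good_joins h i (length h) + isg e) *
     (8/9)^(wtc (Si S0 G0 h i) (step (state S0 G0 h) e) + 12 * sz S0 G0 h i))%R.
Proof.
  intros Hi. unfold Fv. rewrite length_app, Nat.add_comm. simpl plus.
  rewrite good_joins_last, sz_snoc, Si_snoc, state_snoc by auto. reflexivity.
Qed.

Lemma filter_false_len {T} (f : T -> bool) l : (forall y, In y l -> f y = false) -> length (filter f l) = 0.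
Proof. induction l as [|a l IH]; simpl; intros H; auto. rewrite H by auto. apply IH; auto. Qed.

Lemma G_le_S (c : config) : NoDup (cG c) -> incl (cG c) (cS c) -> length (cG c) <= length (cS c).
Proof. intros. apply NoDup_incl_length; auto. Qed.

Lemma len_memb_le (S l : list nat) : NoDup S -> length (filter (fun y => memb y l) S) <= length l.
Proof.
  intros ND. apply incl_filter_len; auto. intros y Hy. apply filter_In in Hy. apply memb_In. tauto.
Qed.

Lemma n0_le_sz n0 L S0 G0 A h i : valid n0 L S0 G0 A -> reachable S0 G0 A h -> length h <= L ->
  n0 <= sz S0 G0 h i.
Proof.
  intros HV R Hl. pose proof HV as HV'. destruct HV' as [_ [_ [_ HV']]].
  assert (Hl' : length (firstn i h) <= L) by (rewrite length_firstn; lia).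
  pose proof (reachable_prefix _ _ _ _ i R) as R'.
  destruct (HV' _ R' Hl') as [Hn _].
  destruct (inv_reach _ _ _ _ _ _ HV R' Hl') as [N1 [N2 [N3 _]]].
  unfold sz, Si, state_at. pose proof (G_le_S _ N2 N3). lia.
Qed.

Lemma inside n0 L S0 G0 A h i : valid n0 L S0 G0 A -> reachable S0 G0 A h -> length h <= L ->
  i <= length h -> alive S0 G0 i h -> 1 <= n0 ->
  4 * length (filter (notin (Si S0 G0 h i)) (cG (state S0 G0 h))) < 3 * length (cG (state S0 G0 h)) /\
  wtc (Si S0 G0 h i) (state S0 G0 h) < 10 * sz S0 G0 h i.
Proof.
  intros HV R Hl Hi Ha Hn0.
  pose proof HV as HV'. destruct HV' as [_ [_ [_ HV']]].
  destruct (HV' h R Hl) as [HG [HB _]].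
  destruct (inv_reach _ _ _ _ _ _ HV R Hl) as [N1 [N2 [N3 _]]].
  destruct (inv_at _ _ _ _ _ h i HV R Hl) as [NSl _].
  fold (Si S0 G0 h i) in NSl. unfold sz. unfold wtc.
  set (Sl := Si S0 G0 h i) in *. set (c := state S0 G0 h) in *.
  set (X := length (filter (notin Sl) (cS c))).
  set (Y := length (filter (notin (cS c)) Sl)).
  assert (HSG := G_le_S _ N2 N3).
  assert (Hsym : 8 * (X + Y) < 5 * length (cS c)).
  { destruct (Nat.eq_dec i (length h)) as [->|Hne].
    - assert (E : Sl = cS c) by (unfold Sl, Si, c; rewrite state_at_full; auto).
      unfold X, Y. rewrite E. rewrite !filter_false_len. lia.
      all: intros y Hy; unfold notin; rewrite (proj2 (memb_In y _) Hy); reflexivity.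
    - specialize (Ha (length h) ltac:(lia)). unfold end_cond, symdiff_size in Ha.
      rewrite state_at_full in Ha. fold c in Ha. fold (Si S0 G0 h i) in Ha. fold Sl in Ha.
      unfold X, Y, notin. lia. }
  assert (Hng : length (filter (notin Sl) (cG c)) <= X).
  { apply incl_filter_len; auto. intros y Hy. apply filter_In in Hy. apply filter_In. split; [apply N3|]; tauto. }
  assert (HSB : length (cS c) <= length (cG c) + length (bads c)).
  { rewrite <- (filter_split_len (fun y => memb y (cG c)) (cS c)).
    pose proof (len_memb_le (cS c) (cG c) N1). unfold bads. lia. }
  assert (HSs : length (cS c) <= length Sl + X).
  { rewrite <- (filter_split_len (fun y => memb y Sl) (cS c)).
    pose proof (len_memb_le (cS c) Sl N1). unfold X, notin. lia. }
  lia.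
Qed.

Definition Qc (n0 : nat) : R := ((8/9)^(12*n0))%R.
Definition Phi n0 S0 G0 i h : R :=
  if lt_dec (length h) i then Qc n0
  else if excluded_middle_informative (Epre S0 G0 i h) then 1%R
  else if excluded_middle_informative (alive S0 G0 i h) then Rmin 1 (Fv S0 G0 i h) else 0%R.

Local Open Scope R_scope.

Lemma Qc_bounds n0 : 0 <= Qc n0 <= 1.
Proof.
  unfold Qc. split; [apply pow_le; lra|]. rewrite <- (pow1 (12*n0)). apply pow_incr; lra.
Qed.

Lemma Fv_nonneg S0 G0 i h : 0 <= Fv S0 G0 i h.
Proof. unfold Fv. apply Rmult_le_pos; apply pow_le; lra. Qed.

Lemma Phi_bounds n0 S0 G0 i h : 0 <= Phi n0 S0 G0 i h <= 1.
Proof.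
  unfold Phi. destruct (lt_dec _ _); [apply Qc_bounds|].
  destruct (excluded_middle_informative _); [lra|].
  destruct (excluded_middle_informative _); [|lra].
  pose proof (Fv_nonneg S0 G0 i h). split.
  - apply Rmin_glb; lra.
  - apply Rmin_l.
Qed.

Lemma Phi_at_i n0 L S0 G0 A i h : valid n0 L S0 G0 A -> reachable S0 G0 A h ->
  (length h <= L)%nat -> length h = i -> Phi n0 S0 G0 i h <= Qc n0.
Proof.
  intros HV R Hl Hi. pose proof (Qc_bounds n0).
  unfold Phi. destruct (lt_dec _ _); [lia|].
  destruct (excluded_middle_informative _) as [[j [Hj _]]|]; [lia|].
  destruct (excluded_middle_informative _); [|lra].
  eapply Rle_trans; [apply Rmin_r|]. unfold Fv.
  rewrite Hi. unfold good_joins. rewrite Nat.sub_diag. simpl firstn. simpl length. rewrite pow_O, Rmult_1_l.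
  unfold Qc. apply qpow_anti. pose proof (n0_le_sz _ _ _ _ _ h i HV R Hl). lia.
Qed.

Lemma Fv_ge1 S0 G0 i h : (23 * sz S0 G0 h i + 4 <= good_joins h i (length h))%nat ->
  (wtc (Si S0 G0 h i) (state S0 G0 h) < 10 * sz S0 G0 h i)%nat -> 1 <= Fv S0 G0 i h.
Proof.
  intros Hg Hw. unfold Fv. set (s := sz S0 G0 h i) in *.
  assert (H1 : (9/8)^(22*s) <= (9/8)^(good_joins h i (length h))) by (apply Rle_pow; [lra|lia]).
  assert (H2 : (8/9)^(22*s) <= (8/9)^(wtc (Si S0 G0 h i) (state S0 G0 h) + 12 * s)) by (apply qpow_anti; lia).
  assert (H3 : (9/8)^(22*s) * (8/9)^(22*s) = 1).
  { rewrite <- Rpow_mult_distr. replace (9/8*(8/9)) with 1 by field. apply pow1. }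
  assert (0 <= (9/8)^(22*s)) by (apply pow_le; lra).
  assert (0 <= (8/9)^(22*s)) by (apply pow_le; lra).
  rewrite <- H3. apply Rmult_le_compat; auto.
Qed.

Lemma avg_if (G : list nat) (p : nat -> bool) (F : R) (f : nat -> R) :
  0 <= F -> G <> [] ->
  (4 * length (filter (fun x => negb (p x)) G) < 3 * length G)%nat ->
  (forall x, In x G -> f x <= if p x then F * (8/9)^6 else F * (9/8)) ->
  / INR (length G) * fsum G f <= F.
Proof.
  intros HF HG Hn Hf.
  assert (Hs : fsum G f <= fsum G (fun x => if p x then F * (8/9)^6 else F * (9/8))) by (apply fsum_mono; auto).
  rewrite fsum_if in Hs.
  pose proof (filter_split_len p G) as Hsp.
  set (d := length (filter p G)) in *. set (a := length (filter (fun x => negb (p x)) G)) in *.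
  assert (HGp : 0 < INR (length G)) by (apply lt_0_INR; destruct G; [congruence|simpl; lia]).
  assert (Ha : 4 * INR a < 3 * INR (length G)).
  { apply lt_INR in Hn. rewrite !mult_INR in Hn. simpl in Hn. lra. }
  assert (HL : INR (length G) = INR d + INR a) by (rewrite <- Hsp, plus_INR; reflexivity).
  assert (Hq : (8/9)^6 = 262144/531441) by (simpl; field).
  rewrite Hq in Hs.
  assert (INR d * (F * (262144 / 531441)) + INR a * (F * (9 / 8)) <= INR (length G) * F).
  { rewrite HL. pose proof (pos_INR d). pose proof (pos_INR a). nra. }
  apply Rmult_le_reg_l with (INR (length G)); auto.
  rewrite <- Rmult_assoc, Rinv_r by lra. lra.
Qed.

Local Close Scope R_scope.
Local Open Scope R_scope.

Lemma reach_snoc_len S0 G0 A h e : reachable S0 G0 A (h ++ [e]) -> length (h ++ [e]) = S (length h).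
Proof. intros. rewrite length_app. simpl. lia. Qed.

Lemma simple_case n0 L S0 G0 A i h e : valid n0 L S0 G0 A -> reachable S0 G0 A h ->
  (length h < L)%nat -> ~ ((i <= length h)%nat /\ ~ Epre S0 G0 i h /\ alive S0 G0 i h) ->
  reachable S0 G0 A (h ++ [e]) -> Phi n0 S0 G0 i (h ++ [e]) <= Phi n0 S0 G0 i h.
Proof.
  intros HV R Hl Hc R'.
  assert (Hl' : length (h ++ [e]) = S (length h)) by (rewrite length_app; simpl; lia).
  destruct (lt_dec (length h) i) as [Hlt|Hge].
  - assert (Ph : Phi n0 S0 G0 i h = Qc n0) by (unfold Phi; destruct (lt_dec _ _); [auto|lia]).
    rewrite Ph. destruct (Nat.eq_dec (S (length h)) i) as [Heq|Hne].
    + apply (Phi_at_i n0 L S0 G0 A); auto; lia.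
    + unfold Phi. destruct (lt_dec _ _); [lra|lia].
  - destruct (excluded_middle_informative (Epre S0 G0 i h)) as [HE|HnE].
    + assert (Ph : Phi n0 S0 G0 i h = 1).
      { unfold Phi. destruct (lt_dec _ _); [lia|]. destruct (excluded_middle_informative _); tauto. }
      rewrite Ph. apply Phi_bounds.
    + assert (HnA : ~ alive S0 G0 i h) by (intro; apply Hc; split; [lia|tauto]).
      assert (Ph : Phi n0 S0 G0 i h = 0).
      { unfold Phi. destruct (lt_dec _ _); [lia|].
        destruct (excluded_middle_informative _); [tauto|]. destruct (excluded_middle_informative _); tauto. }
      rewrite Ph. unfold Phi. destruct (lt_dec _ _); [lia|].
      destruct (excluded_middle_informative _) as [HE'|].
      { apply Epre_snoc_inv in HE'; [tauto|lia]. }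
      destruct (excluded_middle_informative _) as [HA'|]; [|lra].
      apply alive_snoc_inv in HA'; [tauto|lia].
Qed.

Lemma Phi_le_Fv n0 S0 G0 i h e : (i <= length h)%nat -> ~ Epre S0 G0 i (h ++ [e]) ->
  Phi n0 S0 G0 i (h ++ [e]) <= Fv S0 G0 i (h ++ [e]).
Proof.
  intros Hi HnE. pose proof (Fv_nonneg S0 G0 i (h ++ [e])).
  unfold Phi. destruct (lt_dec _ _) as [Hlt|]; [rewrite length_app in Hlt; simpl in Hlt; lia|].
  destruct (excluded_middle_informative _); [tauto|].
  destruct (excluded_middle_informative _); [apply Rmin_r|lra].
Qed.

Lemma local_i n0 L S0 G0 A i h : valid n0 L S0 G0 A -> (1 <= n0)%nat -> reachable S0 G0 A h ->
  (length h < L)%nat ->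
  match A h with
  | MJoin x b => Phi n0 S0 G0 i (h ++ [EJoin x b]) <= Phi n0 S0 G0 i h
  | MDepBad x => Phi n0 S0 G0 i (h ++ [EDep x]) <= Phi n0 S0 G0 i h
  | MDepGood => / INR (length (cG (state S0 G0 h))) *
                fsum (cG (state S0 G0 h)) (fun x => Phi n0 S0 G0 i (h ++ [EDep x])) <= Phi n0 S0 G0 i h
  end.
Proof.
  intros HV Hn0 R Hl.
  pose proof HV as HV'. destruct HV' as [_ [_ [_ HV']]].
  destruct (HV' h R ltac:(lia)) as [HG [HB Hmv]]. specialize (Hmv Hl).
  assert (GNE : cG (state S0 G0 h) <> []).
  { intro E. rewrite E in HG. simpl in HG. lia. }
  destruct (classic ((i <= length h)%nat /\ ~ Epre S0 G0 i h /\ alive S0 G0 i h)) as [Hc|Hc].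
  2:{ destruct (A h) eqn:Ah.
      - apply (simple_case n0 L S0 G0 A); auto. apply reach_join; auto.
      - apply (simple_case n0 L S0 G0 A); auto. apply reach_depbad; auto.
      - apply avg_le; auto. intros x Hx. apply (simple_case n0 L S0 G0 A); auto.
        eapply reach_depgood; eauto. }
  destruct Hc as [Hi [HnE HA]].
  assert (Ph : Phi n0 S0 G0 i h = Rmin 1 (Fv S0 G0 i h)).
  { unfold Phi. destruct (lt_dec _ _); [lia|].
    destruct (excluded_middle_informative _); [tauto|]. destruct (excluded_middle_informative _); tauto. }
  destruct (inside n0 L S0 G0 A h i HV R ltac:(lia) Hi HA Hn0) as [Hng Hw].
  destruct (le_lt_dec (23 * sz S0 G0 h i + 4) (good_joins h i (length h))) as [Hbig|Hsmall].
  { assert (Ph1 : Phi n0 S0 G0 i h = 1).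
    { rewrite Ph. apply Rmin_left. apply Fv_ge1; auto. }
    rewrite Ph1. destruct (A h).
    - apply Phi_bounds. - apply Phi_bounds.
    - apply avg_le; auto. intros; apply Phi_bounds. }
  destruct (inv_reach _ _ _ _ _ _ HV R ltac:(lia)) as [N1 [N2 [N3 N4]]].
  destruct (inv_at _ _ _ _ _ h i HV R ltac:(lia)) as [_ ISl]. fold (Si S0 G0 h i) in ISl.
  assert (HnE' : forall e, ~ Epre S0 G0 i (h ++ [e])).
  { intros e HE. apply Epre_snoc_inv in HE; auto. destruct HE as [|[_ HE]]; [tauto|].
    assert (isg e <= 1)%nat by (destruct e as [? [|]|]; simpl; lia). lia. }
  assert (Hfin : forall e, Phi n0 S0 G0 i (h ++ [e]) <= Fv S0 G0 i h * (9/8)^0 ->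
                 Phi n0 S0 G0 i (h ++ [e]) <= Phi n0 S0 G0 i h).
  { intros e He. rewrite Ph. apply Rmin_glb; [apply Phi_bounds|]. simpl in He. lra. }
  set (g := good_joins h i (length h)) in *. set (s := sz S0 G0 h i) in *.
  set (Sl := Si S0 G0 h i) in *. set (c := state S0 G0 h) in *.
  assert (FvE : Fv S0 G0 i h = (9/8)^g * (8/9)^(wtc Sl c + 12 * s)) by reflexivity.
  destruct (A h) as [x b|x|] eqn:Ah.
  - apply Hfin. eapply Rle_trans; [apply Phi_le_Fv; auto|].
    rewrite Fv_snoc by auto. fold g s Sl c. rewrite FvE.
    assert (HxS : ~ In x Sl) by (intro; apply Hmv; auto).
    rewrite (wtc_join Sl c x b HxS). apply real_step. lia.
  - apply Hfin. eapply Rle_trans; [apply Phi_le_Fv; auto|].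
    rewrite Fv_snoc by auto. fold g s Sl c. rewrite FvE.
    assert (HxG : ~ In x (cG c)).
    { unfold bads in Hmv. apply filter_In in Hmv. destruct Hmv as [_ Hm].
      apply memb_false. destruct (memb x (cG c)); simpl in Hm; congruence. }
    pose proof (wtc_depbad Sl c x HxG). simpl isg. rewrite Nat.add_0_r.
    replace g with (g + 0)%nat at 1 by lia. apply real_step. lia.
  - rewrite Ph. apply Rmin_glb.
    { apply avg_le; auto. intros; apply Phi_bounds. }
    apply (avg_if (cG c) (fun x => memb x Sl)); auto.
    + apply Fv_nonneg.
    + intros x Hx. eapply Rle_trans; [apply Phi_le_Fv; auto|].
      rewrite Fv_snoc by auto. fold g s Sl c. rewrite FvE. simpl isg. rewrite Nat.add_0_r.
      destruct (memb x Sl) eqn:Em.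
      * apply memb_In in Em. pose proof (wtc_dep_old Sl c x (N3 x Hx) Em).
        rewrite Rmult_assoc, <- pow_add. 
        assert (0 <= (9/8)^g) by (apply pow_le; lra).
        apply Rmult_le_compat_l; auto. apply qpow_anti. lia.
      * pose proof (wtc_dep_new Sl c x N2).
        apply Rle_trans with ((9/8)^g * (8/9)^(wtc Sl c + 12*s) * (9/8)^1).
        { replace g with (g + 0)%nat at 1 by lia. apply real_step. lia. }
        rewrite pow_1. lra.
Qed.

Local Close Scope R_scope.

Lemma lt_pow2 q : S q <= 2 ^ q.
Proof. induction q; simpl; lia. Qed.

Lemma poly_exp n K : 1 <= K -> n ^ K <= K ^ K * 2 ^ n.
Proof.
  intros HK. set (q := n / K).
  assert (Hn : n < K * (q + 1)).
  { pose proof (Nat.div_mod n K ltac:(lia)). pose proof (Nat.mod_upper_bound n K ltac:(lia)). unfold q. lia. }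
  assert (HqK : q * K <= n).
  { pose proof (Nat.div_mod n K ltac:(lia)). unfold q. lia. }
  apply Nat.le_trans with ((K * (q+1)) ^ K). { apply Nat.pow_le_mono_l. lia. }
  rewrite Nat.pow_mul_l. apply Nat.mul_le_mono_l.
  apply Nat.le_trans with ((2 ^ q) ^ K). { apply Nat.pow_le_mono_l. pose proof (lt_pow2 q). lia. }
  rewrite <- Nat.pow_mul_r. apply Nat.pow_le_mono_r; lia.
Qed.

Local Open Scope R_scope.

Lemma main_bound n0 L S0 G0 A : valid n0 L S0 G0 A -> (1 <= n0)%nat ->
  prob S0 G0 A (some_interval_too_many_joins S0 G0) L nil <= INR L * Qc n0.
Proof.
  intros HV Hn0.
  set (Phit := fun h => sumR L (fun i => Phi n0 S0 G0 i h)).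
  assert (Hnn : forall h i, (i < L)%nat -> 0 <= Phi n0 S0 G0 i h) by (intros; apply Phi_bounds).
  eapply Rle_trans.
  - apply (prob_bound S0 G0 A _ Phit L); [| | constructor | simpl; lia].
    + intros h R Hl. unfold indicator, Phit.
      destruct (excluded_middle_informative _) as [Hb|Hb].
      2: apply sumR_nonneg; auto.
      destruct Hb as [i [j [[_ [Hij [Hjl [_ Hmin]]]] Hg]]].
      apply sumR_ge_one with i; auto; [lia|].
      right. symmetry. unfold Phi. destruct (lt_dec _ _); [lia|].
      destruct (excluded_middle_informative _) as [|HnE]; auto.
      exfalso. apply HnE. exists j. split; [lia|]. split; auto.
    + intros h R Hl. pose proof (fun i => local_i n0 L S0 G0 A i h HV Hn0 R Hl) as Hloc.
      unfold Phit. destruct (A h) eqn:Ah.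
      * apply sumR_le. intros i _. exact (Hloc i).
      * apply sumR_le. intros i _. exact (Hloc i).
      * rewrite (fsum_sumR _ L (fun i x => Phi n0 S0 G0 i (h ++ [EDep x]))).
        rewrite sumR_mult. apply sumR_le. intros i _. exact (Hloc i).
  - unfold Phit. apply sumR_const_le. intros i Hi.
    destruct i as [|i].
    + apply (Phi_at_i n0 L S0 G0 A); auto; [constructor | simpl; lia].
    + unfold Phi. destruct (lt_dec _ _); [lra|simpl in *; lia].
Qed.

Local Close Scope R_scope.

Theorem lemma3 :
  forall gamma : R, (0 < gamma)%R ->
  exists C : R, exists N : nat,
  forall n0 : nat, N <= n0 -> 40 <= n0 ->
  forall (L : nat), (INR L <= Rpower (INR n0) gamma)%R ->
  forall (S0 G0 : list nat) (A : list event -> move),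
    valid n0 L S0 G0 A ->
    (prob S0 G0 A (some_interval_too_many_joins S0 G0) L nil
       <= C / INR n0)%R.
Proof.
  intros gamma Hg.
  destruct (archimed gamma) as [Hup _].
  set (k := Z.to_nat (up gamma)).
  assert (Hk : (gamma <= INR k)%R).
  { unfold k. rewrite INR_IZR_INZ, Z2Nat.id; [lra|].
    apply le_IZR. lra. }
  exists (INR ((k+1)^(k+1))), 0%nat.
  intros n0 _ Hn0 L HL S0 G0 A HV.
  eapply Rle_trans; [apply (main_bound n0 L S0 G0 A HV); lia|].
  assert (Hnpos : (0 < INR n0)%R) by (apply lt_0_INR; lia).
  assert (HLk : (INR L <= INR n0 ^ k)%R).
  { eapply Rle_trans; [exact HL|]. rewrite <- Rpower_pow by auto.
    apply Rle_Rpower; auto. apply (le_INR 1). lia. }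
  assert (HQ : (Qc n0 <= (1/2)^n0)%R).
  { unfold Qc. rewrite pow_mult. apply pow_incr. split; [apply pow_le; lra|]. simpl. lra. }
  assert (Hpe := poly_exp n0 (k+1) ltac:(lia)).
  apply le_INR in Hpe. rewrite mult_INR, !pow_INR in Hpe.
  replace (INR 2) with 2%R in Hpe by reflexivity.
  assert (H2 : ((1/2)^n0 * 2^n0 = 1)%R).
  { rewrite <- Rpow_mult_distr. replace (1/2*2)%R with 1%R by field. apply pow1. }
  assert (0 <= INR L)%R by apply pos_INR.
  assert (0 <= Qc n0)%R by (unfold Qc; apply pow_le; lra).
  assert (0 < (1/2)^n0)%R by (apply pow_lt; lra).
  assert (0 <= INR n0 ^ k)%R by (apply pow_le; lra).
  apply Rle_trans with (INR n0 ^ k * (1/2)^n0)%R.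
  { apply Rmult_le_compat; auto. }
  rewrite pow_INR.
  apply Rmult_le_reg_l with (INR n0); auto.
  replace (INR n0 * (INR (k+1) ^ (k+1) / INR n0))%R with (INR (k+1) ^ (k+1))%R by (field; lra).
  replace (INR n0 * (INR n0 ^ k * (1/2)^n0))%R with (INR n0 ^ (k+1) * (1/2)^n0)%R.
  2:{ rewrite Nat.add_comm. simpl. ring. }
  apply Rmult_le_reg_r with (2^n0)%R; [apply pow_lt; lra|].
  rewrite Rmult_assoc, H2, Rmult_1_r.
  eapply Rle_trans; [exact Hpe|].
  lra.
Qed.
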